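(* Let $G$ be a finite group, and let $f:G \to \{\pm 1\}$ be a class function (i.e. $f(x^{-1}yx) = f(y)$ for all $x,y \in G$) with $\mathbb{E}_{x \in G} f(x) = 0$. Then \[ \Pr_{x,y}\,[f(x)f(y) = f(xy)] \le \frac{1}{2}\left(1 + \frac{1}{d}\right), \] where $x,y$ are chosen uniformly and independently from $G$, and $d = \min_{\rho \ne 1} d_\rho$ is the minimum dimension of a nontrivial irreducible (complex) representation $\rho$ of $G$.
   Context: $d_\rho$ denotes the dimension of the representation $\rho$; the minimum is over nontrivial irreducible complex representations of $G$. $\mathbb{E}$ denotes the average over the uniform distribution on $G$. *)

(* Defs.v *)
From mathcomp Require Import all_boot all_order all_algebra all_fingroup all_solvable all_field all_character.
Set Implicit Arguments. Unset Strict Implicit. Unset Printing Implicit Defensive.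
Import Order.TTheory GRing.Theory Num.Theory.
Local Open Scope ring_scope.

(* Degrees are positive
   naturals; we take the minimum as a natural number via truncn. *)
Definition min_nontriv_irr_deg (gT : finGroupType) (G : {group gT}) : nat :=
  \big[minn/(#|G|.+1)%N]_(i : Iirr G | i != 0) Num.truncn ('chi[G]_i 1%g).

Definition hom_prob (gT : finGroupType) (G : {group gT}) (f : gT -> algC) : algC :=
  (#|[set p : gT * gT | [&& p.1 \in G, p.2 \in G & f p.1 * f p.2 == f (p.1 * p.2)%g]]|)%:R
  / (#|G| ^ 2)%:R.

(* Main.v *)
Require Import Defs.
From mathcomp Require Import all_boot all_order all_algebra all_fingroup all_solvable all_field all_character.
Import Order.TTheory GRing.Theory Num.Theory.
From mathcomp Require Import ring.
Local Open Scope ring_scope.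

Lemma sum_irr_conj (gT : finGroupType) (G : {group gT}) (i : Iirr G) x y :
  x \in G -> y \in G ->
  \sum_(g in G) 'chi_i (x * y ^ g)%g = #|G|%:R * 'chi_i x * 'chi_i y / 'chi_i 1%g.
Proof.
move=> Gx Gy.
set rG := 'Chi_i.
have irrG : mx_irreducible rG := socle_irr _.
have chiE z : z \in G -> 'chi_i z = \tr (rG z).
  by move=> Gz; rewrite -irrRepr cfunE Gz mulr1n.
pose M := \sum_(g in G) rG (y ^ g)%g.
have cM : centgmx rG M.
  apply/centgmxP => z Gz; rewrite /M mulmx_suml mulmx_sumr.
  rewrite (reindex_inj (mulIg z^-1%g)) /=.
  apply: eq_big => [g|g Gg]; first by rewrite groupMr ?groupV.
  have Gg' : g \in G by move: Gg; rewrite groupMr // groupV.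
  rewrite -!(repr_mxM rG) ?groupJ ?groupM ?groupV //.
  by rewrite conjgM /conjg invgK -!mulgA mulVg mulg1.
  have /is_scalar_mxP[c defM] := mx_abs_irr_cent_scalar (groupC irrG) cM.
have trM : \tr M = #|G|%:R * 'chi_i y.
  rewrite /M raddf_sum /= mulr_natl -sumr_const; apply: eq_bigr => g Gg.
  by rewrite -chiE ?groupJ ?cfunJ.
rewrite defM mxtrace_scalar in trM.
have -> : \sum_(g in G) 'chi_i (x * y ^ g)%g = \tr (rG x *m M).
  rewrite /M mulmx_sumr raddf_sum /=; apply: eq_bigr => g Gg.
  rewrite chiE ?groupM ?groupJ ?groupV //; f_equal. pose proof (repr_mxM rG Gx (groupJ Gy Gg)) as HH. exact HH.
rewrite defM mul_mx_scalar mxtraceZ -chiE // irr1_degree.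
set n := irr_degree _ in trM *.
have n0 : n%:R != 0 :> algC by rewrite pnatr_eq0 -lt0n irr_degree_gt0.
apply: (canRL (mulfK n0)).
by rewrite mulrAC mulr_natr trM mulrAC.
Qed.

Lemma eq_pm1 (u v : algC) : (u = 1 \/ u = -1) -> (v = 1 \/ v = -1) ->
  (u == v)%:R * 2 = 1 + u * v.
Proof.
have h' : (-1 == 1 :> algC) = false.
  by apply: lt_eqF; apply: lt_trans (ltrN10 _) ltr01.
have h : (1 == -1 :> algC) = false by rewrite eq_sym.
by case=> ->; case=> ->; rewrite ?eqxx ?h ?h' ?mulN1r ?mul1r ?opprK ?subrr ?mul0r.
Qed.

Lemma bigmin_le (I : finType) (P : pred I) (F : I -> nat) m i :
  P i -> (\big[minn/m]_(j | P j) F j <= F i)%N.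
Proof.
move=> Pi; rewrite -big_filter.
have : i \in [seq j <- index_enum I | P j] by rewrite mem_filter Pi mem_index_enum.
elim: [seq j <- index_enum I | P j] => // j r IH; rewrite big_cons inE.
case/orP => [/eqP-> | /IH]; first exact: geq_minl.
by apply: leq_trans; apply: geq_minr.
Qed.

Theorem theorem2 (gT : finGroupType) (G : {group gT}) (f : gT -> algC)
  (f_pm1 : forall x, x \in G -> f x = 1 \/ f x = -1)
  (f_class : forall x y, x \in G -> y \in G -> f (y ^ x)%g = f y)
  (f_mean0 : \sum_(x in G) f x = 0) :
  hom_prob G f <= 2^-1 * (1 + ((min_nontriv_irr_deg G)%:R)^-1).
Proof.
set d := min_nontriv_irr_deg G.
set N : algC := #|G|%:R.
have N0 : N != 0 := neq0CG G.
have Ngt0 : 0 < N := gt0CG G.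
have fC x : x \in G -> (f x)^* = f x.
  by move=> Gx; case: (f_pm1 x Gx) => ->; rewrite ?rmorphN rmorph1.
have ff x : x \in G -> f x * f x = 1.
  by move=> Gx; case: (f_pm1 x Gx) => ->; rewrite ?mulrNN mulr1.
pose fG x := if x \in G then f x else 0.
have cfP : is_class_fun <<G>>%g (finfun fG).
  rewrite genGid; apply: intro_class_fun => [x y Gx Gy|x /negbTE nGx].
    by rewrite /fG groupJr // Gx f_class.
  by rewrite /fG nGx.
pose phi : 'CF(G) := Cfun 0 cfP.
have phiE x : x \in G -> phi x = f x by move=> Gx; rewrite cfunE /fG Gx.
pose a i := '[phi, 'chi[G]_i].
have a0 : a 0 = 0.
  rewrite /a irr0 cfdotE (eq_bigr f) ?f_mean0 ?mulr0 // => x Gx.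
  by rewrite phiE // cfun1E Gx rmorph1 mulr1.
have nphi : '[phi] = 1.
  rewrite cfdotE (eq_bigr (fun _ => 1)); last by move=> x Gx; rewrite phiE // fC // ff.
  by rewrite sumr_const -/N mulVf.
have asum : \sum_i `|a i| ^+ 2 = 1.
  rewrite -nphi cfdot_sum_irr; apply: eq_bigr => i _; exact: normCK.
have ale1 i : `|a i| <= 1.
  rewrite -(expr_le1 (n:=2)) //.
  have := cfCauchySchwarz phi 'chi_i; rewrite nphi cfnorm_irr mul1r.
  by case.
have Ti i : \sum_(x in G) \sum_(y in G) f x * f y * 'chi_i (x * y)%g
            = N ^+ 2 * (a i)^* ^+ 2 / 'chi_i 1%g.
  have su : \sum_(x in G) f x * 'chi_i x = N * (a i)^*.
    rewrite /a cfdotC conjCK cfdotE mulrA mulfV // mul1r.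
    by apply: eq_bigr => x Gx; rewrite phiE // fC // mulrC.
  apply: (mulfI N0).
  transitivity (\sum_(g in G) \sum_(x in G) \sum_(y in G) f x * f y * 'chi_i (x * y ^ g)%g).
    rewrite mulr_natl -sumr_const; apply: eq_bigr => g Gg.
    apply: eq_bigr => x Gx; rewrite (reindex_inj (conjg_inj g)) /=.
    apply: eq_big => [y|y Gy]; first by rewrite groupJr.
    by rewrite f_class // -(groupJr _ Gg).
  transitivity (\sum_(x in G) \sum_(y in G) (f x * 'chi_i x) * (f y * 'chi_i y) * (N / 'chi_i 1%g)).
    rewrite exchange_big; apply: eq_bigr => x Gx; rewrite exchange_big; apply: eq_bigr => y Gy.
    rewrite -mulr_sumr sum_irr_conj // -/N; ring.
  transitivity ((\sum_(x in G) f x * 'chi_i x) ^+ 2 * (N / 'chi_i 1%g)).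
    rewrite expr2 !mulr_suml; apply: eq_bigr => x _.
    by rewrite mulr_sumr mulr_suml; apply: eq_bigr => y _.
  rewrite su; field; exact: irr1_neq0.
set S := \sum_(x in G) \sum_(y in G) f x * f y * f (x * y)%g.
have SE : S = N ^+ 2 * \sum_i a i * (a i)^* ^+ 2 / 'chi_i 1%g.
  have phiS z : z \in G -> f z = \sum_i a i * 'chi_i z.
    move=> Gz; rewrite -phiE // {1}(cfun_sum_cfdot phi) sum_cfunE.
    by apply: eq_bigr => i _; rewrite cfunE.
  transitivity (\sum_(x in G) \sum_(y in G) \sum_i a i * (f x * f y * 'chi_i (x * y)%g)).
    apply: eq_bigr => x Gx; apply: eq_bigr => y Gy.
    rewrite (phiS (x * y)%g) ?groupM // mulr_sumr; apply: eq_bigr => i _; ring.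
  transitivity (\sum_i \sum_(x in G) \sum_(y in G) a i * (f x * f y * 'chi_i (x * y)%g)).
    rewrite [RHS]exchange_big /=; apply: eq_bigr => x _; exact: exchange_big.
  rewrite mulr_sumr; apply: eq_bigr => i _.
  transitivity (a i * \sum_(x in G) \sum_(y in G) f x * f y * 'chi_i (x * y)%g).
    rewrite mulr_sumr; apply: eq_bigr => x _; by rewrite mulr_sumr.
  rewrite Ti; ring.
have dpos : (0 < d)%N.
  rewrite /d /min_nontriv_irr_deg; apply: (big_ind (fun m => 0 < m)%N) => //.
    by move=> m n; rewrite leq_min => -> ->.
  by move=> i _; rewrite irr1_degree natrK irr_degree_gt0.
have dle (i : Iirr G) : i != 0 -> d%:R <= 'chi_i 1%g.
  move=> i0; have : (d <= Num.truncn ('chi_i 1%g))%N.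
    rewrite /d /min_nontriv_irr_deg. have := @bigmin_le (Iirr G) (fun j : Iirr G => j != 0) (fun j : Iirr G => Num.truncn ('chi[G]_j 1%g)) (#|G|.+1) i i0. by [].
  by rewrite irr1_degree natrK ler_nat.
have fR x : x \in G -> f x \is Num.real.
  by move=> Gx; case: (f_pm1 x Gx) => ->; rewrite ?rpredN rpred1.
have Sreal : S \is Num.real.
  apply: rpred_sum => x Gx; apply: rpred_sum => y Gy.
  by rewrite !rpredM ?fR ?groupM.
clearbody a.
have Sle : S <= N ^+ 2 * d%:R^-1.
  apply: le_trans (real_ler_norm Sreal) _.
  rewrite SE normrM normrX (ger0_norm (ltW Ngt0)) ler_pM2l ?exprn_gt0 //.
  apply: le_trans (ler_norm_sum _ _ _) _.
  have -> : d%:R^-1 = \sum_i `|a i| ^+ 2 * d%:R^-1 :> algC.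
    by rewrite -mulr_suml asum mul1r.
  apply: ler_sum => i _.
  rewrite !normrM !norm_conjC normfV (ger0_norm (ltW (irr1_gt0 i))) -expr2.
  case: (eqVneq i 0) => [-> | i0]; first by rewrite a0 normr0 !mul0r expr0n /= mul0r.
  rewrite -[X in _ <= X * _]mul1r; apply: ler_pM.
  - by rewrite mulr_ge0 ?exprn_ge0 ?normr_ge0.
  - by rewrite invr_ge0 ltW ?irr1_gt0.
  - by rewrite ler_wpM2r ?exprn_ge0 ?normr_ge0 ?ale1.
  - by rewrite lef_pV2 ?posrE ?irr1_gt0 ?ltr0n ?dle.
have cnt : (#|[set p : gT * gT | [&& p.1 \in G, p.2 \in G & f p.1 * f p.2 == f (p.1 * p.2)%g]]|)%:R
           = 2^-1 * (N ^+ 2 + S) :> algC.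
  have pm x y : x \in G -> y \in G -> f x * f y = 1 \/ f x * f y = -1.
    move=> Gx Gy; case: (f_pm1 x Gx) => ->; case: (f_pm1 y Gy) => ->;
      rewrite ?mulN1r ?mul1r ?opprK; auto.
  have -> : #|[set p : gT * gT | [&& p.1 \in G, p.2 \in G & f p.1 * f p.2 == f (p.1 * p.2)%g]]|
        = (\sum_(x in G) \sum_(y in G) (nat_of_bool (f x * f y == f (x * y)%g)%R))%N.
    rewrite -sum1_card pair_big /= big_mkcond [RHS]big_mkcond /=.
    apply: eq_bigr => -[x y] _ /=; rewrite !inE /=.
    by case: (x \in G); case: (y \in G); case: (_ == _).
  rewrite natr_sum.
  transitivity (\sum_(x in G) \sum_(y in G) 2^-1 * (1 + f x * f y * f (x * y)%g)).
    apply: eq_bigr => x Gx; rewrite natr_sum; apply: eq_bigr => y Gy.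
    rewrite -(eq_pm1 _ _ (pm x y Gx Gy) (f_pm1 _ (groupM Gx Gy))) [RHS]mulrC mulfK //.
    by rewrite pnatr_eq0.
  transitivity (2^-1 * \sum_(x in G) \sum_(y in G) (1 + f x * f y * f (x * y)%g)).
    by rewrite mulr_sumr; apply: eq_bigr => x _; rewrite mulr_sumr.
  congr (_ * _).
  have -> : N ^+ 2 = \sum_(x in G) \sum_(y in G) (1 : algC).
    by rewrite expr2 !sumr_const mulr_natr.
  rewrite /S -big_split; apply: eq_bigr => x _; by rewrite -big_split.
rewrite /hom_prob cnt natrX -/N ler_pdivrMr ?exprn_gt0 // -mulrA ler_pM2l ?invr_gt0 ?ltr0n //.
by rewrite mulrDl mul1r lerD2l mulrC.
Qed.
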